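(* Let $G=(\mathcal V,\mathcal E)$ with $|\mathcal V|=n$, $\chi=\{0,\dots,d-1\}$, $C$, $2\le m\le n$ and $\mathbb L_m$ be as in the context, let $\mathcal V_m$ be the set of vertices of $\mathbb L_m$, $\mathcal V_m^*$ the set of vertices minimizing $\langle C,\cdot\rangle$ over $\mathbb L_m$, and $\Delta=\min_{V_1\in\mathcal V_m\setminus\mathcal V_m^*,\,V_2\in\mathcal V_m^*}(\langle C,V_1\rangle-\langle C,V_2\rangle)$. If $\mathbb L_m$ is tight, $|\mathcal V_m^*|=1$, and $\eta\ge\frac{\log(8mn^md^m)+2mn^md^m}{\Delta}$, then the assignment $x_i=\arg\max_{x'\in\chi}(\Gamma^*_\eta)_i(x')$, $i\in\mathcal V$, is a MAP assignment, i.e. it maximizes $\sum_{i}\theta_i(x_i)+\sum_{ij\in\mathcal E}\theta_{ij}(x_i,x_j)$ over $\chi^n$.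
   Context: A pairwise graphical model has vertex set $\mathcal V=\{1,\dots,n\}$, edge set $\mathcal E$ (each vertex lies on at least one edge), state set $\chi=\{0,\dots,d-1\}$, potentials $\theta_i:\chi\to\mathbb R$, $\theta_{ij}:\chi^2\to\mathbb R$, and cost $C=-\theta$. For $2\le m\le n$, the Sherali–Adams polytope $\mathbb L_m$ is the set of collections $\Gamma=(\Gamma_S)_{S\subseteq\mathcal V,1\le|S|\le m}$ of nonnegative functions $\Gamma_S:\chi^S\to[0,\infty)$ each summing to $1$, such that for $S\subset T$ the marginal of $\Gamma_T$ on $S$ is $\Gamma_S$; $\Gamma_i=\Gamma_{\{i\}}$, $\Gamma_{ij}=\Gamma_{\{i,j\}}$. $C$ is extended by $0$ on subsets that are neither singletons nor edges and $\langle C,\Gamma\rangle=\sum_i\sum_xC_i(x)\Gamma_i(x)+\sum_{ij\in\mathcal E}\sum_{x_i,x_j}C_{ij}(x_i,x_j)\Gamma_{ij}(x_i,x_j)$. $H(\Gamma)=\sum\Gamma(-\log\Gamma+1)$ summed over all entries, and $\Gamma^*_\eta=\arg\min_{\Gamma\in\mathbb L_m}\langle C,\Gamma\rangle-\frac1\eta H(\Gamma)$. $\mathbb L_m$ is tight if $\max_{\Gamma\in\mathbb L_m}\langle\theta,\Gamma\rangle$ has an integral optimal solution. *)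

(* Defs.v *)
From HB Require Import structures.
From mathcomp Require Import all_boot all_order all_algebra.
From mathcomp Require Import reals exp.
Set Implicit Arguments. Unset Strict Implicit. Unset Printing Implicit Defensive.
Import Order.TTheory GRing.Theory Num.Theory.
Local Open Scope ring_scope.

Section SheraliAdams.
Variables (R : realType) (n d : nat).

(* An entry Gamma_S(x_S) of the
   collection (Gamma_S)_S is encoded as the value of Gamma at the partial
   assignment with domain S that coincides with x_S on S. *)
Definition pa := {ffun 'I_n -> option 'I_d}.
Definition dom (y : pa) : {set 'I_n} := [set i | y i != None].
Definition pa1 (i : 'I_n) (x : 'I_d) : pa :=
  [ffun k => if k == i then Some x else None].
Definition pa2 (i j : 'I_n) (xi xj : 'I_d) : pa :=
  [ffun k => if k == i then Some xi else if k == j then Some xj else None].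
Definition in_range (m : nat) (y : pa) : bool :=
  (0 < #|dom y|)%N && (#|dom y| <= m)%N.
Definition agrees_on (S : {set 'I_n}) (z y : pa) : bool :=
  [forall i in S, z i == y i].

Definition SA_polytope (m : nat) (G : {ffun pa -> R}) : Prop :=
  [/\ (forall y, ~~ in_range m y -> G y = 0),
      (forall y, in_range m y -> 0 <= G y),
      (forall S : {set 'I_n}, (0 < #|S|)%N -> (#|S| <= m)%N ->
          \sum_(y | dom y == S) G y = 1) &
      (forall (S T : {set 'I_n}) (y : pa),
          (0 < #|S|)%N -> S \subset T -> (#|T| <= m)%N -> dom y = S ->
          G y = \sum_(z | (dom z == T) && agrees_on S z y) G z)].

(* Pairwise model: edges are ordered pairs (i,j) with i < j, potentials
   th1 (theta_i) and th2 (theta_ij); the cost is C = - theta. *)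
Variables (E : {set 'I_n * 'I_n}) (th1 : 'I_n -> 'I_d -> R)
  (th2 : 'I_n -> 'I_n -> 'I_d -> 'I_d -> R).

Definition pot_dot (t1 : 'I_n -> 'I_d -> R) (t2 : 'I_n -> 'I_n -> 'I_d -> 'I_d -> R)
  (G : {ffun pa -> R}) : R :=
  \sum_(i : 'I_n) \sum_(x : 'I_d) t1 i x * G (pa1 i x) +
  \sum_(e in E) \sum_(xi : 'I_d) \sum_(xj : 'I_d)
      t2 e.1 e.2 xi xj * G (pa2 e.1 e.2 xi xj).

Definition theta_dot (G : {ffun pa -> R}) : R := pot_dot th1 th2 G.
Definition cost_dot (G : {ffun pa -> R}) : R :=
  pot_dot (fun i x => - th1 i x) (fun i j a b => - th2 i j a b) G.

Definition entropy (m : nat) (G : {ffun pa -> R}) : R :=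
  \sum_(y | in_range m y) G y * (- ln (G y) + 1).

Definition is_reg_opt (m : nat) (eta : R) (G : {ffun pa -> R}) : Prop :=
  SA_polytope m G /\
  forall G', SA_polytope m G' ->
    cost_dot G - eta^-1 * entropy m G <= cost_dot G' - eta^-1 * entropy m G'.

Definition is_vertex (m : nat) (G : {ffun pa -> R}) : Prop :=
  SA_polytope m G /\
  forall (A B : {ffun pa -> R}) (t : R), SA_polytope m A -> SA_polytope m B ->
    0 < t < 1 -> (forall y, G y = t * A y + (1 - t) * B y) -> A = B.

Definition is_opt_vertex (m : nat) (G : {ffun pa -> R}) : Prop :=
  is_vertex m G /\ forall G', SA_polytope m G' -> cost_dot G <= cost_dot G'.

Definition is_min_gap (m : nat) (Delta : R) : Prop :=
  (exists V1 V2, [/\ is_vertex m V1, ~ is_opt_vertex m V1, is_opt_vertex m V2 &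
                   Delta = cost_dot V1 - cost_dot V2]) /\
  (forall V1 V2, is_vertex m V1 -> ~ is_opt_vertex m V1 -> is_opt_vertex m V2 ->
                 Delta <= cost_dot V1 - cost_dot V2).

Definition integral (m : nat) (G : {ffun pa -> R}) : Prop :=
  forall y, in_range m y -> G y = 0 \/ G y = 1.
Definition SA_tight (m : nat) : Prop :=
  exists G, [/\ SA_polytope m G, integral m G &
                forall G', SA_polytope m G' -> theta_dot G' <= theta_dot G].

Definition score (x : {ffun 'I_n -> 'I_d}) : R :=
  \sum_(i : 'I_n) th1 i (x i) + \sum_(e in E) th2 e.1 e.2 (x e.1) (x e.2).
Definition is_MAP (x : {ffun 'I_n -> 'I_d}) : Prop :=
  forall x' : {ffun 'I_n -> 'I_d}, score x' <= score x.
End SheraliAdams.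

(* Main.v *)
From HB Require Import structures.
From mathcomp Require Import all_boot all_order all_algebra.
From mathcomp Require Import reals exp.
From mathcomp Require Import ring lra.
From Stdlib Require Import Classical.
Require Import Defs.
Import Order.TTheory GRing.Theory Num.Theory.
Local Open Scope ring_scope.


Section Aux.
Variables (R : realType) (n d m : nat).
Local Notation pa := (pa n d).
Local Notation F := {ffun pa -> R}.
Local Notation P := (@SA_polytope R n d m).

Definition hom (u : F) : Prop :=
  [/\ (forall y, ~~ in_range m y -> u y = 0),
      (forall S : {set 'I_n}, (0 < #|S|)%N -> (#|S| <= m)%N ->
          \sum_(y | dom y == S) u y = 0) &
      (forall (S T : {set 'I_n}) (y : pa),
          (0 < #|S|)%N -> S \subset T -> (#|T| <= m)%N -> dom y = S ->
          u y = \sum_(z | (dom z == T) && agrees_on S z y) u z)].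

Definition addf (x u : F) (s : R) : F := [ffun y => x y + s * u y].

Lemma P_add x u s : P x -> hom u ->
  (forall y, in_range m y -> 0 <= x y + s * u y) -> P (addf x u s).
Proof.
case=> h1 h2 h3 h4 [k1 k2 k3] hn; split.
- by move=> y hy; rewrite ffunE h1 // k1 // mulr0 addr0.
- by move=> y hy; rewrite ffunE; apply: hn.
- move=> S h0 hS; under eq_bigr do rewrite ffunE.
  by rewrite big_split /= -mulr_sumr h3 // k2 // mulr0 addr0.
- move=> S T y h0 hST hT hy; rewrite ffunE; under eq_bigr do rewrite ffunE.
  by rewrite big_split /= -mulr_sumr -h4 // -k3.
Qed.

Lemma hom_diff A B : P A -> P B -> hom [ffun y => A y - B y].
Proof.
case=> a1 a2 a3 a4 [b1 b2 b3 b4]; split.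
- by move=> y hy; rewrite ffunE a1 // b1 // subrr.
- move=> S h0 hS; under eq_bigr do rewrite ffunE.
  by rewrite sumrB a3 // b3 // subrr.
- move=> S T y h0 hST hT hy; rewrite ffunE; under eq_bigr do rewrite ffunE.
  by rewrite sumrB -a4 // -b4.
Qed.

Lemma pot_lin (E : {set 'I_n * 'I_n}) t1 t2 (x u : F) s :
  pot_dot E t1 t2 (addf x u s) = pot_dot E t1 t2 x + s * pot_dot E t1 t2 u.
Proof.
rewrite /pot_dot mulrDr !mulr_sumr addrACA -!big_split /=; congr (_ + _).
  apply: eq_bigr => i _; rewrite mulr_sumr -big_split; apply: eq_bigr => a _.
  by rewrite ffunE /= mulrDr mulrCA.
apply: eq_bigr => e _; rewrite mulr_sumr -big_split; apply: eq_bigr => a _.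
rewrite mulr_sumr -big_split; apply: eq_bigr => b _.
by rewrite ffunE /= mulrDr mulrCA.
Qed.

Lemma cost_theta (E : {set 'I_n * 'I_n}) t1 t2 (x : F) :
  cost_dot E t1 t2 x = - theta_dot E t1 t2 x.
Proof.
rewrite /cost_dot /theta_dot /pot_dot opprD -!sumrN; congr (_ + _).
  by apply: eq_bigr => i _; rewrite -sumrN; apply: eq_bigr => a _; rewrite mulNr.
apply: eq_bigr => e _; rewrite -sumrN; apply: eq_bigr => a _.
by rewrite -sumrN; apply: eq_bigr => b _; rewrite mulNr.
Qed.


Lemma dom_in_range {G : F} {y : pa} : P G -> in_range m y ->
  \sum_(z : pa | dom z == dom y) G z = 1.
Proof. by case=> _ _ h3 _ /andP[h0 hm]; apply: h3. Qed.

Lemma P_ge0 {G : F} y : P G -> 0 <= G y.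
Proof.
case=> h1 h2 _ _; case hy: (in_range m y); first exact: h2.
by rewrite h1 ?hy.
Qed.

Lemma pair_le1 (G : F) y1 y2 : P G -> in_range m y1 -> y1 != y2 ->
  dom y1 = dom y2 -> G y1 + G y2 <= 1.
Proof.
move=> hP hr hne hd; rewrite -(dom_in_range hP hr).
rewrite (bigD1 y1) //= (bigD1 y2) /=; last by rewrite hd eqxx eq_sym hne.
rewrite addrA lerDl; apply: sumr_ge0 => z _; exact: P_ge0.
Qed.

Lemma le1 {G : F} y : P G -> G y <= 1.
Proof.
move=> hP; case hr: (in_range m y); last by case: hP => h1 _ _ _; rewrite h1 ?hr.
rewrite -(dom_in_range hP hr) (bigD1 y) //= lerDl.
apply: sumr_ge0 => z _; exact: P_ge0.
Qed.

Lemma marg_le (G : F) (S T : {set 'I_n}) (y z : pa) : P G -> (0 < #|S|)%N -> S \subset T ->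
  (#|T| <= m)%N -> dom y = S -> dom z = T -> agrees_on S z y -> G z <= G y.
Proof.
move=> hP h0 hST hT hy hz ha; case: (hP) => _ _ _ h4.
rewrite (h4 S T y) // (bigD1 z) /=; last by rewrite hz eqxx ha.
rewrite lerDl; apply: sumr_ge0 => w _; exact: P_ge0.
Qed.

Lemma comb0 {t a b : R} : 0 < t < 1 -> 0 <= a -> 0 <= b ->
  t * a + (1 - t) * b = 0 -> a = 0 /\ b = 0.
Proof.
move=> /andP[t0 t1] a0 b0 h.
have ta : 0 <= t * a by rewrite mulr_ge0 // ltW.
have tb : 0 <= (1 - t) * b by rewrite mulr_ge0 // subr_ge0 ltW.
have h1 : t * a = 0 by lra.
have h2 : (1 - t) * b = 0 by lra.
by split; [move/eqP: h1 | move/eqP: h2]; rewrite mulf_eq0 => /orP[/eqP|/eqP] //; lra.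
Qed.

Lemma comb1 {t a b : R} : 0 < t < 1 -> a <= 1 -> b <= 1 ->
  t * a + (1 - t) * b = 1 -> a = 1 /\ b = 1.
Proof.
move=> ht ha hb h.
have := @comb0 t (1 - a) (1 - b) ht; rewrite !subr_ge0 => /(_ ha hb) [].
  by lra.
by move=> /eqP; rewrite subr_eq0 eq_sym => /eqP -> /eqP; rewrite subr_eq0 eq_sym => /eqP ->.
Qed.

Lemma integral_vertex (G : F) : P G -> integral m G -> is_vertex m G.
Proof.
move=> hP hI; split=> // A B t hA hB ht hG; apply/ffunP => y.
case hr: (in_range m y); last first.
  by case: hA => a1 _ _ _; case: hB => b1 _ _ _; rewrite a1 ?b1 ?hr.
case: (hI y hr) => hy; move: (hG y); rewrite hy => /esym h.
  by have [-> ->] := comb0 ht (P_ge0 y hA) (P_ge0 y hB) h.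
by have [-> ->] := comb1 ht (le1 y hA) (le1 y hB) h.
Qed.


Definition supp (G : F) : {set pa} := [set y | G y != 0].

Lemma neg_exists (u : F) y0 : hom u -> u y0 != 0 -> exists y, u y < 0.
Proof.
move=> [k1 k2 k3] hne.
case: (boolP [exists y, u y < 0]) => [/existsP[y hy]|]; first by exists y.
rewrite negb_exists => /forallP hall.
have hge : forall y, 0 <= u y by move=> y; rewrite leNgt hall.
have hr : in_range m y0 by apply/negPn/negP => h; move/eqP: hne; rewrite k1.
case/andP: hr => h0 hm.
have := k2 _ h0 hm; rewrite (bigD1 y0) //= => h.
have : u y0 <= 0.
  rewrite -h lerDl; apply: sumr_ge0 => z _; exact: hge.
by rewrite le_eqVlt (negbTE hne) /= ltNge hge.
Qed.

Lemma step (x u : F) : P x -> hom u -> (forall y, x y = 0 -> u y = 0) ->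
  (exists y, u y < 0) ->
  exists s, [/\ 0 < s, P (addf x u s) & (#|supp (addf x u s)| < #|supp x|)%N].
Proof.
move=> hP hu hz [y0 hy0].
case: (@arg_minP _ R _ y0 [pred y | u y < 0] (fun y => x y / - u y) hy0)
  => ys /= hys hmin.
set s := x ys / - u ys.
have hr : in_range m ys.
  by apply/negPn/negP => h; case: hu => k1 _ _; move: hys; rewrite k1 // ltxx.
have xs0 : x ys != 0.
  by apply/eqP => h; move: hys; rewrite hz // ltxx.
have xpos : 0 < x ys by rewrite lt_def xs0 P_ge0.
have spos : 0 < s by rewrite divr_gt0 // oppr_gt0.
exists s; split => //.
- apply: P_add => // y hy.
  case: (ltP (u y) 0) => huy.
    have := hmin y huy; rewrite ler_pdivlMr ?oppr_gt0 // mulrN => hh; rewrite /s; lra.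
  by apply: addr_ge0; [exact: P_ge0|apply: mulr_ge0 => //; exact: ltW].
- apply: proper_card; apply/properP; split.
    apply/subsetP => y; rewrite !inE ffunE; apply: contraNN => /eqP hh.
    by rewrite hh (hz _ hh) mulr0 addr0.
  exists ys; rewrite !inE ?xs0 // ffunE negbK /s.
  have hu0 : u ys != 0 by rewrite lt_eqF.
  by apply/eqP; field.
Qed.


Lemma key (C : F -> R) (hC : forall x u s, C (addf x u s) = C x + s * C u)
  (V : F) (p : pa) (Delta : R) :
  0 <= Delta -> in_range m p -> V p = 1 ->
  (forall W, is_vertex m W -> (forall G', P G' -> C W <= C G') -> W = V) ->
  (forall W, is_vertex m W -> ~ (forall G', P G' -> C W <= C G') ->
     Delta <= C W - C V) ->
  forall x, P x -> Delta * (1 - x p) <= C x - C V.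
Proof.
move=> hD hp hVp huniq hgap.
have main : forall x, P x ->
   (forall x', P x' -> (#|supp x'| < #|supp x|)%N ->
       Delta * (1 - x' p) <= C x' - C V) ->
   Delta * (1 - x p) <= C x - C V.
  move=> x hP IH.
  case: (classic (exists A B t, [/\ P A, P B, 0 < t < 1,
     (forall y, x y = t * A y + (1 - t) * B y) & A <> B])).
    move=> [A [B [t [hA hB ht hx hAB]]]].
    have hz : forall y, x y = 0 -> A y = 0 /\ B y = 0.
      by move=> y hy; apply: (comb0 ht (P_ge0 y hA) (P_ge0 y hB)); rewrite -hx.
    have [y0 hy0] : exists y, A y != B y.
      apply: NNPP => hn; apply: hAB; apply/ffunP => y; apply/eqP.
      by apply/negPn/negP => h; apply: hn; exists y.
    set u := [ffun y => A y - B y].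
    set v := [ffun y => B y - A y].
    have hu : hom u by apply: hom_diff.
    have hv : hom v by apply: hom_diff.
    have hzu : forall y, x y = 0 -> u y = 0.
      by move=> y /hz [ha hb]; rewrite ffunE ha hb subrr.
    have hzv : forall y, x y = 0 -> v y = 0.
      by move=> y /hz [ha hb]; rewrite ffunE ha hb subrr.
    have nu : exists y, u y < 0.
      by apply: (neg_exists _ y0 hu); rewrite ffunE subr_eq0.
    have nv : exists y, v y < 0.
      by apply: (neg_exists _ y0 hv); rewrite ffunE subr_eq0 eq_sym.
    have [s1 [s1p hP1 hc1]] := step _ _ hP hu hzu nu.
    have [s2 [s2p hP2 hc2]] := step _ _ hP hv hzv nv.
    have I1 := IH _ hP1 hc1.
    have I2 := IH _ hP2 hc2.
    rewrite hC ffunE in I1; rewrite hC ffunE in I2.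
    have C0 : C 0 = 0.
      have := hC 0 0 1; have -> : addf 0 0 1 = 0.
        by apply/ffunP => y; rewrite !ffunE mulr0 addr0.
      by rewrite mul1r => /eqP; rewrite -subr_eq subrr eq_sym => /eqP.
    have Cuv : C v = - C u.
      have := hC v u 1; have -> : addf v u 1 = 0.
        by apply/ffunP => y; rewrite !ffunE mul1r; ring.
      by rewrite C0 mul1r => /eqP; rewrite eq_sym addr_eq0 => /eqP.
    have vp : v p = - u p by rewrite !ffunE opprB.
    rewrite Cuv vp in I2.
    nra.
  move=> hn.
  have hvx : is_vertex m x.
    split => // A B t hA hB ht hx; apply: NNPP => hne; apply: hn.
    by exists A, B, t; split.
  case: (classic (forall G', P G' -> C x <= C G')) => hopt.
    by rewrite (huniq x hvx hopt) hVp subrr mulr0 subrr.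
  have := hgap x hvx hopt.
  have : 0 <= Delta * x p by rewrite mulr_ge0 // P_ge0.
  lra.
suff : forall k x, (#|supp x| <= k)%N -> P x -> Delta * (1 - x p) <= C x - C V.
  by move=> h x hx; apply: (h _ x (leqnn _) hx).
elim=> [|k IHk] x hk hP; apply: main => // x' hP' hlt.
  by move: hlt; rewrite leqn0 in hk; rewrite (eqP hk).
by apply: IHk => //; rewrite -ltnS (leq_trans hlt).
Qed.


Definition liftx (x : {ffun 'I_n -> 'I_d}) : pa := [ffun k => Some (x k)].
Definition restr (x : {ffun 'I_n -> 'I_d}) (S : {set 'I_n}) : pa :=
  [ffun k => if k \in S then Some (x k) else None].
Definition Ipt (x : {ffun 'I_n -> 'I_d}) : F :=
  [ffun y => if in_range m y && agrees_on (dom y) y (liftx x) then 1 else 0].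

Lemma dom_restr x S : dom (restr x S) = S.
Proof. by apply/setP => k; rewrite !inE ffunE; case: (k \in S). Qed.

Lemma restr_uniq x S (y : pa) : dom y = S -> agrees_on S y (liftx x) -> y = restr x S.
Proof.
move=> hy /forall_inP ha; apply/ffunP => k; rewrite ffunE.
case hk: (k \in S); first by apply/eqP; move: (ha k hk); rewrite ffunE.
by move: hk; rewrite -hy inE => /negbFE/eqP.
Qed.

Lemma sum_ind (Q c : pred pa) y0 : Q y0 -> c y0 -> (forall y, Q y -> c y -> y = y0) ->
  \sum_(y | Q y) (if c y then 1 else 0 : R) = 1.
Proof.
move=> hq hc hu; rewrite (bigD1 y0) //= hc big1 ?addr0 // => y /andP[hy hne].
by case hcy: (c y) => //; move: hne; rewrite (hu y hy hcy) eqxx.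
Qed.

Lemma sum_ind0 (Q c : pred pa) : (forall y, Q y -> ~~ c y) ->
  \sum_(y | Q y) (if c y then 1 else 0 : R) = 0.
Proof. by move=> h; apply: big1 => y hy; rewrite (negbTE (h y hy)). Qed.

Lemma Ipt_P x : P (Ipt x).
Proof.
split.
- by move=> y hy; rewrite ffunE (negbTE hy).
- by move=> y _; rewrite ffunE; case: ifP.
- move=> S h0 hS; under eq_bigr do rewrite ffunE.
  apply: (sum_ind _ _ (restr x S)) => /=.
  + by rewrite dom_restr.
  + rewrite dom_restr /in_range dom_restr h0 hS /=.
    by apply/forall_inP => k hk; rewrite !ffunE hk.
  + by move=> y /eqP hy /andP[_]; rewrite hy; apply: restr_uniq.
- move=> S T y h0 hST hT hy; under eq_bigr do rewrite ffunE.
  have hST' := subset_leq_card hST.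
  rewrite ffunE /in_range hy h0 (leq_trans hST' hT) /=.
  case: (boolP (agrees_on S y (liftx x))) => ha.
  + apply/esym; apply: (sum_ind _ _ (restr x T)) => /=.
    * rewrite dom_restr eqxx /=; apply/forall_inP => k hk.
      move/forall_inP: ha => /(_ k hk); rewrite !ffunE (subsetP hST k hk).
      by move/eqP->.
    * rewrite /= /in_range !dom_restr (leq_trans h0 hST') hT /=.
      by apply/forall_inP => k hk; rewrite !ffunE hk.
    * by move=> z /andP[/eqP hz _] /andP[_]; rewrite hz; apply: restr_uniq.
  + apply/esym; apply: (sum_ind0 _ _) => z /andP[/eqP hz /forall_inP hzy].
    apply/negP => /andP[_ /forall_inP hzl]; move/negP: ha; apply.
    apply/forall_inP => k hk; move/eqP: (hzy k hk) <-.
    by apply: hzl; rewrite hz (subsetP hST k hk).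
Qed.


Lemma dom_pa1 (i : 'I_n) (a : 'I_d) : dom (pa1 i a) = [set i].
Proof. by apply/setP => k; rewrite !inE ffunE; case: (k == i). Qed.

Lemma dom_pa2 (i j : 'I_n) (a b : 'I_d) : dom (pa2 i j a b) = [set i; j].
Proof.
by apply/setP => k; rewrite !inE ffunE; case: (k == i) => //; case: (k == j).
Qed.

Lemma range_pa1 (i : 'I_n) (a : 'I_d) : (1 <= m)%N -> in_range m (pa1 i a).
Proof. by move=> hm; rewrite /in_range dom_pa1 cards1. Qed.

Lemma range_pa2 (i j : 'I_n) (a b : 'I_d) : (2 <= m)%N -> i != j -> in_range m (pa2 i j a b).
Proof. by move=> hm hij; rewrite /in_range dom_pa2 cards2 hij. Qed.

Lemma Ipt_pa1 x (i : 'I_n) (a : 'I_d) : (1 <= m)%N -> Ipt x (pa1 i a) = (a == x i)%:R.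
Proof.
move=> hm; rewrite ffunE range_pa1 //= dom_pa1.
case: (boolP (a == x i)) => [/eqP ->|hne].
  by rewrite ifT //; apply/forall_inP => k /set1P ->; rewrite !ffunE eqxx.
rewrite ifF //; apply/negP => /forall_inP /(_ i (set11 i)).
by rewrite !ffunE eqxx => /eqP [] /eqP; rewrite (negbTE hne).
Qed.

Lemma Ipt_pa2 x (i j : 'I_n) (a b : 'I_d) : (2 <= m)%N -> i != j ->
  Ipt x (pa2 i j a b) = ((a == x i) && (b == x j))%:R.
Proof.
move=> hm hij; rewrite ffunE range_pa2 //= dom_pa2.
case: (boolP ((a == x i) && (b == x j))) => [/andP[/eqP -> /eqP ->]|hne].
  rewrite ifT //; apply/forall_inP => k /set2P [->|->]; rewrite !ffunE ?eqxx //.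
  by case: (j =P i) => [->|].
rewrite ifF //; apply/negP => /forall_inP h.
move: (h i (set21 i j)) (h j (set22 i j)); rewrite !ffunE eqxx [j == i]eq_sym (negbTE hij) eqxx.
by move=> /eqP [] ha /eqP [] hb; rewrite ha hb !eqxx in hne.
Qed.

Lemma theta_Ipt (E : {set 'I_n * 'I_n}) th1 th2 x :
  (forall e, e \in E -> (e.1 < e.2)%N) -> (2 <= m)%N ->
  theta_dot E th1 th2 (Ipt x) = score E th1 th2 x.
Proof.
move=> hE hm; rewrite /theta_dot /pot_dot /score; congr (_ + _).
  apply: eq_bigr => i _; rewrite (bigD1 (x i)) //= Ipt_pa1 ?(leq_trans _ hm) //.
  rewrite eqxx mulr1 big1 ?addr0 // => a ha.
  by rewrite Ipt_pa1 ?(leq_trans _ hm) // (negbTE ha) mulr0.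
apply: eq_bigr => e he.
have hij : e.1 != e.2 by rewrite neq_ltn hE.
rewrite (bigD1 (x e.1)) //= (bigD1 (x e.2)) //= Ipt_pa2 // !eqxx mulr1.
rewrite big1 ?addr0; last first.
  by move=> b hb; rewrite Ipt_pa2 // eqxx (negbTE hb) mulr0.
rewrite big1 ?addr0 // => a ha; apply: big1 => b _.
by rewrite Ipt_pa2 // (negbTE ha) mulr0.
Qed.


Lemma V_Ipt (V : F) (x : {ffun 'I_n -> 'I_d}) : (1 <= m)%N -> P V -> (forall i, V (pa1 i (x i)) = 1) ->
  V = Ipt x.
Proof.
move=> hm hP hV1.
have hA : forall y, in_range m y -> ~~ agrees_on (dom y) y (liftx x) -> V y = 0.
  move=> y hr /forall_inPn [k hk hne].
  have : y k != None by rewrite inE in hk.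
  case hyk: (y k) => [c|] // _.
  rewrite hyk ffunE in hne.
  have h1 : V y <= V (pa1 k c).
    case/andP: hr => h0 hmy.
    apply: (marg_le V [set k] (dom y) (pa1 k c) y hP); rewrite ?cards1 //.
    - by rewrite sub1set.
    - exact: dom_pa1.
    - by apply/forall_inP => k' /set1P ->; rewrite !ffunE eqxx hyk.
  have h2 : V (pa1 k c) + V (pa1 k (x k)) <= 1.
    apply: pair_le1 => //; first exact: range_pa1.
      apply/eqP => heq; have := congr1 (fun f : pa => f k) heq.
      by rewrite !ffunE eqxx => heq'; rewrite heq' eqxx in hne.
    by rewrite !dom_pa1.
  rewrite hV1 in h2.
  have g1 := P_ge0 y hP; have g2 := P_ge0 (pa1 k c) hP.
  by apply/eqP; rewrite eq_le; apply/andP; split; lra.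
apply/ffunP => y; rewrite [RHS]ffunE.
case hr: (in_range m y); last by case: hP => h1 _ _ _; rewrite h1 ?hr.
case: (boolP (agrees_on (dom y) y (liftx x))) => ha /=; last by apply: hA; rewrite ?hr.
have := dom_in_range hP hr; rewrite (bigD1 y) //= big1 ?addr0 // => z /andP[/eqP hz hne].
apply: hA; first by rewrite /in_range hz.
apply/negP => hza; rewrite hz in hza; move: hne.
by rewrite (restr_uniq x (dom y) z hz hza) -(restr_uniq x _ y erefl ha) eqxx.
Qed.


Section Count.
Variables (i0 : 'I_n) (a0 : 'I_d).

Definition fenc (y : pa) : {ffun 'I_m -> 'I_n} :=
  [ffun j : 'I_m => nth (head i0 (enum (dom y))) (enum (dom y)) j].
Definition genc (y : pa) : {ffun 'I_m -> 'I_d} :=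
  [ffun j : 'I_m => odflt a0 (y (fenc y j))].

Lemma memf (y : pa) : in_range m y -> forall k,
  (k \in dom y) <-> exists j : 'I_m, fenc y j = k.
Proof.
case/andP=> h0 hm k; rewrite cardE in h0 hm; split.
  move=> hk; have hks : k \in enum (dom y) by rewrite mem_enum.
  have hj : (index k (enum (dom y)) < m)%N.
    by apply: leq_trans hm; rewrite index_mem.
  by exists (Ordinal hj); rewrite ffunE /= nth_index.
case=> j <-; rewrite ffunE -mem_enum.
case: (ltnP j (size (enum (dom y)))) => hj; first exact: mem_nth.
rewrite nth_default //; move: h0; case: (enum (dom y)) => //= a s _.
exact: mem_head.
Qed.

Lemma enc_inj : {in [set y : pa | in_range m y] &, injective (fun y => (fenc y, genc y))}.
Proof.
move=> y1 y2; rewrite !inE => h1 h2 [hf hg]; apply/ffunP => k.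
have hsome : forall (y : pa) j, in_range m y -> y (fenc y j) = Some (genc y j).
  move=> y j hr.
  have : fenc y j \in dom y by apply/(memf _ hr _); exists j.
  by rewrite inE [genc y j]ffunE; case: (y (fenc y j)).
case: (boolP (k \in dom y1)) => hk.
  have [j hj] := (memf _ h1 k).1 hk.
  rewrite -hj (hsome _ _ h1) hf (hsome _ _ h2) hg //.
have hk2 : k \notin dom y2.
  apply/negP => /(memf _ h2 k) [j hj]; move/negP: hk; apply.
  by apply/(memf _ h1 k); exists j; rewrite hf.
move: hk hk2; rewrite !inE !negbK => /eqP -> /eqP ->. done.
Qed.

Lemma card_range : (1 <= m)%N -> (#|[set y : pa | in_range m y]| <= m * n ^ m * d ^ m)%N.
Proof.
move=> hm; rewrite -(card_in_imset enc_inj).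
apply: leq_trans (max_card _) _.
rewrite card_prod !card_ffun !card_ord -mulnA leq_pmull //.
Qed.
End Count.


Lemma tlog (t : R) : 0 <= t -> t * (- ln t + 1) <= 1.
Proof.
rewrite le_eqVlt => /orP[/eqP <-|tp]; first by rewrite mul0r ler01.
have h : - ln t <= t^-1 - 1.
  have := @le_ln1Dx R (t^-1 - 1).
  have -> : 1 + (t^-1 - 1) = t^-1 by rewrite addrC subrK.
  rewrite lnV ?posrE //; apply.
  have : 0 < t^-1 by rewrite invr_gt0.
  lra.
have h2 : - ln t + 1 <= t^-1 by lra.
apply: (le_trans (ler_wpM2l (ltW tp) h2)).
by rewrite mulfV // gt_eqF.
Qed.

Lemma ent_le (G : F) : P G -> entropy m G <= #|[set y : pa | in_range m y]|%:R.
Proof.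
move=> hP; rewrite /entropy.
have -> : #|[set y : pa | in_range m y]|%:R = \sum_(y : pa | in_range m y) (1 : R).
  rewrite (eq_bigl (fun y => y \in [set y : pa | in_range m y])) ?sumr_const //.
  by move=> y; rewrite inE.
apply: ler_sum => y _; apply: tlog; exact: P_ge0.
Qed.

Lemma ent_ge0 (G : F) : P G -> 0 <= entropy m G.
Proof.
move=> hP; apply: sumr_ge0 => y _; apply: mulr_ge0; first exact: P_ge0.
have := ln_le0 (le1 y hP); lra.
Qed.


Lemma main_sec (E : {set 'I_n * 'I_n})
  (th1 : 'I_n -> 'I_d -> R) (th2 : 'I_n -> 'I_n -> 'I_d -> 'I_d -> R)
  (hE : forall e, e \in E -> (e.1 < e.2)%N)
  (hm : (2 <= m)%N) (hmn : (m <= n)%N)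
  (htight : SA_tight E th1 th2 m)
  (huniq : exists V, is_opt_vertex E th1 th2 m V /\
             forall W, is_opt_vertex E th1 th2 m W -> W = V)
  (Delta : R) (hDelta : is_min_gap E th1 th2 m Delta)
  (eta : R)
  (heta : (ln ((8 * m * n ^ m * d ^ m)%N)%:R + ((2 * m * n ^ m * d ^ m)%N)%:R)
            / Delta <= eta)
  (Gstar : {ffun pa -> R}) (hGstar : is_reg_opt E th1 th2 m eta Gstar)
  (x : {ffun 'I_n -> 'I_d})
  (hx : forall (i : 'I_n) (x' : 'I_d), Gstar (pa1 i x') <= Gstar (pa1 i (x i))) :
  is_MAP E th1 th2 x.
Proof.
set C := cost_dot E th1 th2.
have m1 : (1 <= m)%N by apply: leq_trans hm.
have n0 : (0 < n)%N by apply: leq_trans hmn.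
pose i0 : 'I_n := Ordinal n0.
pose a0 : 'I_d := x i0.
have d0 : (0 < d)%N by apply: leq_ltn_trans (leq0n _) (ltn_ord a0).
case: huniq => V [[hVv hVopt] hVu].
have hPV : P V by case: hVv.
case: htight => Gt [hPt hIt hmax].
have hGt : Gt = V.
  apply: hVu; split; first exact: integral_vertex.
  by move=> G' hG'; rewrite /C !cost_theta lerN2; apply: hmax.
have hIV : integral m V by rewrite -hGt.
case: hDelta => [[V1 [V2 [hv1 hn1 ho2 hD12]]] hgap].
have hDp : 0 < Delta.
  rewrite hD12 subr_gt0 ltNge; apply/negP => hle; apply: hn1; split => //.
  by move=> G' hG'; apply: le_trans hle (ho2.2 G' hG').
set N := (m * n ^ m * d ^ m)%N.
have N1 : (1 <= N)%N by rewrite /N !muln_gt0 !expn_gt0 n0 d0 (leq_trans _ hm).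
have hL : 0 < ln ((8 * m * n ^ m * d ^ m)%N)%:R :> R.
  apply: ln_gt0; rewrite ltr1n -!mulnA; apply: leq_trans (leq_pmulr 8 _) => //.
  by rewrite !mulnA.
move: heta; rewrite ler_pdivrMr // => heta.
have h2N : ((2 * m * n ^ m * d ^ m)%N)%:R = 2 * (N%:R : R).
  by rewrite /N -!mulnA natrM.
rewrite h2N in heta.
have hN0 : 0 <= (N%:R : R) by [].
have etap : 0 < eta.
  have : 0 < eta * Delta by lra.
  by rewrite pmulr_lgt0.
case: hGstar => hPG hGopt.
have hKN : (#|[set y : pa | in_range m y]| <= N)%N := card_range i0 a0 m1.
have hHG : entropy m Gstar <= N%:R.
  apply: le_trans (ent_le _ hPG) _; by rewrite ler_nat.
have hHV := ent_ge0 _ hPV.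
have hgapC : forall W, is_vertex m W -> ~ (forall G', P G' -> C W <= C G') ->
    Delta <= C W - C V.
  by move=> W hW hnW; apply: hgap => // -[_]; apply: hnW.
have hxi : forall i, V (pa1 i (x i)) = 1.
  move=> i.
  have [a ha] : exists a, V (pa1 i a) = 1.
    apply: NNPP => hno.
    have := dom_in_range hPV (range_pa1 i (x i) m1).
    rewrite big1 => [/eqP|z /eqP hz]; first by rewrite eq_sym oner_eq0.
    have [a hza] : exists a, z = pa1 i a.
      have : i \in dom z by rewrite hz dom_pa1 set11.
      rewrite inE; case hzi: (z i) => [a|] // _; exists a.
      apply/ffunP => k; rewrite ffunE; case: (k =P i) => [->//|/eqP hki].
      have : k \notin dom z by rewrite hz dom_pa1 inE.
      by rewrite inE negbK => /eqP.
    rewrite hza; case: (hIV (pa1 i a) (range_pa1 i a m1)) => // h1.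
    by exfalso; apply: hno; exists a.
  have hkey := key C (pot_lin E _ _) V (pa1 i a) Delta (ltW hDp) (range_pa1 i a m1) ha
     (fun W hW hopt => hVu W (conj hW hopt)) hgapC Gstar hPG.
  have hopt := hGopt V hPV.
  have hinv : 0 < eta^-1 by rewrite invr_gt0.
  have h1 : Delta * (1 - Gstar (pa1 i a)) <= eta^-1 * N%:R.
    apply: le_trans hkey _.
    have : eta^-1 * entropy m Gstar <= eta^-1 * N%:R by rewrite ler_wpM2l // ltW.
    have : 0 <= eta^-1 * entropy m V by rewrite mulr_ge0 // ltW.
    rewrite /C; lra.
  have h2 : eta * Delta * (1 - Gstar (pa1 i a)) <= N%:R.
    have := ler_wpM2l (ltW etap) h1.
    by rewrite mulrA mulrA mulfV ?gt_eqF // mul1r.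
  have hhalf : 1 / 2 < Gstar (pa1 i a).
    set A := eta * Delta in h2 heta.
    have hA : 0 <= A by rewrite /A mulr_ge0 // ltW.
    nra.
  case: (x i =P a) => [-> //|/eqP hne].
  have hneq : pa1 i (x i) != pa1 i a.
    apply/eqP => heq; have := congr1 (fun f : pa => f i) heq.
    by rewrite !ffunE eqxx => -[] /eqP; rewrite (negbTE hne).
  have := pair_le1 _ (pa1 i (x i)) (pa1 i a) hPG (range_pa1 i (x i) m1) hneq.
  rewrite !dom_pa1 => /(_ erefl).
  have := hx i a; lra.
have hVI := V_Ipt V x m1 hPV hxi.
move=> x'.
rewrite -!(theta_Ipt E th1 th2 _ hE hm) -hVI.
have := hVopt (Ipt x') (Ipt_P x'); rewrite !cost_theta lerN2 //.
Qed.

End Aux.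

Theorem corollary1 (R : realType) (n d m : nat) (E : {set 'I_n * 'I_n})
  (th1 : 'I_n -> 'I_d -> R) (th2 : 'I_n -> 'I_n -> 'I_d -> 'I_d -> R)
  (hE : forall e, e \in E -> (e.1 < e.2)%N)
  (hcov : forall i : 'I_n, exists2 e, e \in E & (e.1 == i) || (e.2 == i))
  (hm : (2 <= m)%N) (hmn : (m <= n)%N)
  (htight : SA_tight E th1 th2 m)
  (huniq : exists V, is_opt_vertex E th1 th2 m V /\
             forall W, is_opt_vertex E th1 th2 m W -> W = V)
  (Delta : R) (hDelta : is_min_gap E th1 th2 m Delta)
  (eta : R)
  (heta : (ln ((8 * m * n ^ m * d ^ m)%N)%:R + ((2 * m * n ^ m * d ^ m)%N)%:R)
            / Delta <= eta)
  (Gstar : {ffun pa n d -> R}) (hGstar : is_reg_opt E th1 th2 m eta Gstar)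
  (x : {ffun 'I_n -> 'I_d})
  (hx : forall (i : 'I_n) (x' : 'I_d), Gstar (pa1 i x') <= Gstar (pa1 i (x i))) :
  is_MAP E th1 th2 x.
Proof.
exact: (@main_sec R n d m E th1 th2 hE hm hmn htight huniq Delta hDelta eta heta Gstar hGstar x hx).
Qed.
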